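(* Let $\mathcal{A}\subseteq 2^{[n]}$ be an arbitrary family of sets. For $A\in\mathcal{A}$ let $c(A)$ be the maximum $k$ such that $A$ belongs to a $k$-chain consisting of sets from $\mathcal{A}$. Then \[ \sum_{A\in\mathcal{A}} \frac{1}{\binom{n}{|A|}\,c(A)} \le 1, \] and equality holds if and only if $\mathcal{A}$ is a nonempty union of complete levels, i.e. $\mathcal{A}=\bigcup_{i\in I}\binom{[n]}{i}$ for some nonempty $I\subseteq\{0,1,\dots,n\}$.
   Context: $[n]=\{1,\dots,n\}$ and $2^{[n]}$ is its power set. A $k$-chain is a collection of $k$ sets $A_1\subsetneq A_2\subsetneq\cdots\subsetneq A_k$. $\binom{[n]}{i}$ denotes the family of all $i$-element subsets of $[n]$ (the $i$-th level). *)

(* Defs.v *)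
From mathcomp Require Import all_boot all_order all_algebra.
Set Implicit Arguments. Unset Strict Implicit. Unset Printing Implicit Defensive.
Import GRing.Theory Num.Theory.

Definition is_chain (n : nat) (C : {set {set 'I_n}}) : bool :=
  [forall X in C, forall Y in C, (X \subset Y) || (Y \subset X)].

Definition cmax (n : nat) (F : {set {set 'I_n}}) (A : {set 'I_n}) : nat :=
  \max_(C : {set {set 'I_n}} | [&& C \subset F, A \in C & is_chain C]) #|C|.

Definition level (n i : nat) : {set {set 'I_n}} := [set X : {set 'I_n} | #|X| == i].

(* Main.v *)
Require Import Defs.
From mathcomp Require Import all_boot all_order all_algebra.
From mathcomp Require Import all_fingroup.
From mathcomp Require Import zify.
Import Order.TTheory GRing.Theory Num.Theory.
Set Implicit Arguments. Unset Strict Implicit. Unset Printing Implicit Defensive.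

Section S.
Variable n : nat.
Notation T := ('I_n).

Lemma exists_perm (e : seq T) : uniq e -> (forall x, x \in e) ->
  exists s : {perm T}, forall x, val (s x) = index x e.
Proof.
move=> ue ce.
have lt x : index x e < n.
  have := max_card (mem e); rewrite card_ord (card_uniqP ue) => H.
  by apply: leq_trans H; rewrite index_mem.
pose f x : T := insubd x (index x e).
have vf x : val (f x) = index x e by rewrite val_insubd lt.
have fi : injective f.
  move=> x y /(congr1 val); rewrite !vf => h.
  by rewrite -(nth_index x (ce x)) h nth_index.
by exists (perm fi) => x; rewrite permE vf.
Qed.

Definition pre (s : {perm T}) (k : nat) : {set T} := [set x | s x < k].

Lemma pre_mono s j k : j <= k -> pre s j \subset pre s k.
Proof. by move=> jk; apply/subsetP=> x; rewrite !inE => h; apply: leq_trans jk. Qed.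

Lemma card_lt k : k <= n -> #|[set i : T | i < k]| = k.
Proof.
elim: k => [|k IH] kn.
  by apply/eqP; rewrite cards_eq0; apply/eqP/setP=> i; rewrite !inE.
have -> : [set i : T | i < k.+1] = Ordinal kn |: [set i : T | i < k].
  by apply/setP=> i; rewrite !inE ltnS leq_eqVlt -val_eqE.
by rewrite cardsU1 inE ltnn IH // ltnW.
Qed.

Lemma card_pre s k : k <= n -> #|pre s k| = k.
Proof.
move=> kn; rewrite -[RHS](card_lt kn) -(card_preimset [set i : T | i < k] (@perm_inj _ s)).
by apply: eq_card => x; rewrite !inE.
Qed.

Lemma pre_exists (A : {set T}) : exists s, pre s #|A| = A.
Proof.
have u : uniq (enum A ++ enum (~: A)).
  rewrite cat_uniq !enum_uniq /= andbT; apply/hasPn => x.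
  by rewrite !mem_enum inE => ->.
have c : forall x, x \in enum A ++ enum (~: A).
  by move=> x; rewrite mem_cat !mem_enum inE orbN.
have [s Hs] := exists_perm u c.
exists s; apply/setP => x; rewrite inE Hs index_cat mem_enum.
case: ifP => xA; first by rewrite cardE index_mem mem_enum xA.
by rewrite -cardE ltnNge leq_addr.
Qed.

Definition N (A : {set T}) := #|[set s : {perm T} | pre s #|A| == A]|.

Lemma N_le (A B : {set T}) : #|A| = #|B| -> N A <= N B.
Proof.
move=> AB; have [sA HA] := pre_exists A; have [sB HB] := pre_exists B.
pose tau := (sB * sA^-1)%g.
rewrite /N -(card_imset _ (mulgI tau)); apply: subset_leq_card.
apply/subsetP => y /imsetP[t]; rewrite inE => /eqP Ht ->.
rewrite inE -AB; apply/eqP/setP => x.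
have e1 : (t (tau x) < #|A|) = (tau x \in A) by rewrite -{2}Ht inE.
have e2 : (tau x \in A) = (sA (tau x) < #|A|) by rewrite -{1}HA inE.
rewrite !inE permM e1 e2 /tau permM permKV.
by rewrite AB -{2}HB inE.
Qed.

Lemma N_level (A : {set T}) : 'C(n, #|A|) * N A = n`!.
Proof.
rewrite -{1}(card_ord n) -card_draws -card_Sn.
have -> : #|[set B : {set T} | #|B| == #|A|]| * N A =
    \sum_(B in [set B : {set T} | #|B| == #|A|]) N B.
  rewrite -sum_nat_const; apply: eq_bigr => B; rewrite inE => /eqP h.
  by apply/eqP; rewrite eqn_leq !N_le.
rewrite /N; under eq_bigr do rewrite -sum1_card.
rewrite (exchange_big_dep predT) //= -[RHS]sum1_card; apply: eq_bigr => s _.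
rewrite (big_pred1 (pre s #|A|)) // => B; rewrite !inE /=.
apply/idP/idP => [/andP[/eqP h /eqP <-]|/eqP ->]; first by rewrite h.
have hn : #|A| <= n by have := max_card (mem A); rewrite card_ord.
have h : #|pre s #|A| | = #|A| by rewrite card_pre.
by rewrite h !eqxx.
Qed.


Variable F : {set {set T}}.
Local Notation c A := (cmax F A).

Definition G s := [set A in F | pre s #|A| == A].

Lemma G_chain s : is_chain (G s).
Proof.
apply/forallP => X; apply/implyP; rewrite inE => /andP[_ /eqP hX].
apply/forallP => Y; apply/implyP; rewrite inE => /andP[_ /eqP hY].
rewrite -hX -hY; case: (leqP #|X| #|Y|) => h.
  by rewrite pre_mono.
by rewrite (pre_mono _ (ltnW h)) orbT.
Qed.

Lemma cmax_ge (C : {set {set T}}) A : C \subset F -> A \in C -> is_chain C -> #|C| <= c A.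
Proof. by move=> h1 h2 h3; apply: (leq_bigmax_cond (P := fun C => _)); rewrite h1 h2 h3. Qed.

Lemma G_sub s : G s \subset F.
Proof. by apply/subsetP => A; rewrite inE => /andP[]. Qed.

Lemma cG s A : A \in G s -> #|G s| <= c A.
Proof. by move=> h; apply: cmax_ge => //; [apply: G_sub | apply: G_chain]. Qed.

Local Open Scope ring_scope.

Definition h s : rat := \sum_(A in G s) ((c A)%:R)^-1.

Lemma term_le s A : A \in G s -> ((c A)%:R : rat)^-1 <= (#|G s|%:R)^-1.
Proof.
move=> hA; have m0 : (0 < #|G s|)%N by apply/card_gt0P; exists A.
have := cG hA => hle.
rewrite lef_pV2 ?ler_nat // posrE ltr0n //; exact: leq_trans hle.
Qed.

Lemma h_le1 s : h s <= 1.
Proof.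
case: (posnP #|G s|) => m0.
  by rewrite /h big_pred0 // => A; rewrite (cards0_eq m0) in_set0.
apply: (le_trans (ler_sum _ (fun A hA => term_le hA))).
by rewrite sumr_const -[X in X <= _]mulr_natl mulfV // pnatr_eq0 -lt0n.
Qed.

Lemma h_eq1 s : h s = 1 -> (0 < #|G s|)%N /\ forall A, A \in G s -> c A = #|G s|.
Proof.
move=> h1.
case: (posnP #|G s|) => m0.
  move: h1; rewrite /h big_pred0 => [/esym/eqP|A]; first by rewrite oner_eq0.
  by rewrite (cards0_eq m0) in_set0.
split=> // A hA.
have e : \sum_(B in G s) ((#|G s|%:R : rat)^-1 - ((c B)%:R)^-1) = 0.
  by rewrite sumrB -/(h s) h1 sumr_const -[X in X - _]mulr_natl mulfV ?subrr // pnatr_eq0 -lt0n.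
have := psumr_eq0P _ e hA.
move=> /(_ (fun B hB => ltac:(by rewrite subr_ge0 (term_le hB))))/eqP.
rewrite subr_eq0 => /eqP/invr_inj/eqP; rewrite eqr_nat => /eqP ->.
by [].
Qed.

Lemma N_pos A : (0 < N A)%N.
Proof.
rewrite lt0n; apply/eqP => h0; have := N_level A; rewrite h0 muln0 => e.
by have := fact_gt0 n; rewrite -e.
Qed.

Lemma sum_id : \sum_(A in F) ((('C(n, #|A|) * c A)%N)%:R : rat)^-1
   = (n`!%:R)^-1 * \sum_(s : {perm T}) h s.
Proof.
transitivity (\sum_(A in F) (n`!%:R : rat)^-1 * ((N A)%:R * ((c A)%:R)^-1)).
  apply: eq_bigr => A _; rewrite -(N_level A) !natrM !invfM mulrA.
  by rewrite -(mulrA _ _ (N A)%:R) mulVf ?mulr1 // pnatr_eq0 -lt0n N_pos.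
rewrite -mulr_sumr; congr (_ * _).
transitivity (\sum_(A in F) \sum_(s in [set s | pre s #|A| == A]) ((c A)%:R : rat)^-1).
  by apply: eq_bigr => A _; rewrite sumr_const mulr_natl.
rewrite (exchange_big_dep predT) //=; apply: eq_bigr => s _.
by rewrite /h; apply: eq_bigl => A; rewrite !inE.
Qed.

Lemma sum_le1 : \sum_(A in F) ((('C(n, #|A|) * c A)%N)%:R : rat)^-1 <= 1.
Proof.
rewrite sum_id; have nf : (n`!%:R : rat) != 0 by rewrite pnatr_eq0 -lt0n fact_gt0.
rewrite -[leRHS](mulVf nf) ler_pM2l ?invr_gt0 ?ltr0n ?fact_gt0 //.
rewrite -(card_Sn n) -sum1_card natr_sum ler_sum // => s _; exact: h_le1.
Qed.

Lemma sum_eq1 : \sum_(A in F) ((('C(n, #|A|) * c A)%N)%:R : rat)^-1 = 1 <->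
  forall s, h s = 1.
Proof.
have nf : (n`!%:R : rat) != 0 by rewrite pnatr_eq0 -lt0n fact_gt0.
have e1 : (n`!%:R : rat) = \sum_(s : {perm T}) 1.
  by rewrite -(card_Sn n) -sum1_card natr_sum.
rewrite sum_id; split => [H s|H].
  have e : \sum_(s : {perm T}) (1 - h s) = 0.
    rewrite sumrB -e1; apply/eqP; rewrite subr_eq0; apply/eqP.
    by move/(congr1 (fun x => n`!%:R * x)): H; rewrite mulrA mulfV // mul1r mulr1.
  have hp : forall t : {perm T}, true -> 0 <= 1 - h t by move=> t _; rewrite subr_ge0 h_le1.
  have := psumr_eq0P hp e (i:=s) isT.
  by move=> /eqP; rewrite subr_eq0 => /eqP <-.
by under eq_bigr do rewrite H; rewrite -e1 mulVf.
Qed.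


Definition seqab (D : {set T}) a b :=
  enum D ++ a :: b :: enum (~: ([set a; b] :|: D)).

Lemma seqab_ok (D : {set T}) (a b : T) : a \notin D -> b \notin D -> a != b ->
  uniq (seqab D a b) /\ forall z, z \in seqab D a b.
Proof.
move=> aD bD ab; split.
  rewrite /seqab cat_uniq !enum_uniq /= !mem_enum !inE (negbTE aD) (negbTE bD) /=.
  rewrite enum_uniq (negbTE ab) mem_enum !inE !eqxx /= !orbT /= andbT.
  apply/hasPn => z; rewrite !mem_enum !inE !negb_or => /andP[_ ->] //.
move=> z; rewrite /seqab mem_cat !inE !mem_enum !inE.
by case: (z \in D); case: (z == a); case: (z == b).
Qed.

Lemma idx (D : {set T}) (a b z : T) : index z (seqab D a b) =
  if z \in D then index z (enum D) else
  if z == a then #|D| else if z == b then #|D|.+1 else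
  (#|D|.+2 + index z (enum (~: ([set a; b] :|: D))))%N.
Proof.
rewrite /seqab index_cat mem_enum -cardE; case: (z \in D) => //=.
by rewrite ![_ == z]eq_sym; case: (z == a) => /=; case: (z == b) => /=; rewrite ?addn0 ?addn1 // !addnS !addSn.
Qed.

Lemma idxD (D : {set T}) (z : T) : z \in D -> (index z (enum D) < #|D|)%N.
Proof. by move=> h; rewrite cardE index_mem mem_enum. Qed.

Lemma swap_perm (D : {set T}) (a b : T) : a \notin D -> b \notin D -> a != b ->
  exists s, pre s #|D|.+1 = a |: D /\
   forall s' : {perm T}, (forall z, val (s' z) = index z (seqab D b a)) ->
     forall j, j != #|D|.+1 -> pre s j = pre s' j.
Proof.
move=> aD bD ab; have [u c] := seqab_ok aD bD ab.
have [s Hs] := exists_perm u c; exists s; split.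
  apply/setP => z; rewrite !inE Hs idx.
  case: ifP => zD; first by rewrite orbT ltnS ltnW // idxD.
  by case: (z == a) => //; case: (z == b) => //; lia.
move=> s' Hs' j hj; apply/setP => z; rewrite !inE Hs Hs' !idx.
have e : [set b; a] = [set a; b] by rewrite setUC.
rewrite e; case: (z \in D) => //.
move: hj; set k := #|D| => hj.
case: (eqVneq z a) => [->|za]; first by rewrite (negbTE ab); apply/idP/idP; lia.
by case: (z == b) => //; apply/idP/idP; lia.
Qed.

Lemma swap (Hall : forall s, h s = 1) (A : {set T}) (x y : T) : A \in F -> x \in A -> y \notin A ->
  y |: (A :\ x) \in F.
Proof.
move=> AF xA yA.
set D := A :\ x.
have xD : x \notin D by rewrite !inE eqxx.
have yD : y \notin D by rewrite !inE (negbTE yA) andbF.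
have xy : x != y by apply: contraNneq yA => <-.
have [s [Hs Hpre]] := swap_perm xD yD xy.
have yx : y != x by rewrite eq_sym.
have [u c] := seqab_ok yD xD yx.
have [s' Hs'] := exists_perm u c.
have Ak : #|A| = #|D|.+1 by rewrite (cardsD1 x A) xA.
have AD : x |: D = A by rewrite setD1K.
have pre_s'' : pre s' #|D|.+1 = y |: D.
  apply/setP => z; rewrite inE in_setU1 Hs' idx.
  case: ifP => zD; first by rewrite orbT ltnS ltnW // idxD.
  set k := #|D|.
  by case: (z == y) => //; case: (z == x) => //=; lia.
case: (boolP (y |: D \in F)) => // BF; exfalso.
have AG : A \in G s by rewrite inE AF Ak Hs AD eqxx.
have AG' : A \notin G s'.
  rewrite inE AF Ak pre_s'' /=; apply/eqP => e.
  by move: xA; rewrite -e in_setU1 (negbTE xy) (negbTE xD).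
have sub : G s' \subset G s.
  apply/subsetP => C; rewrite !inE => /andP[CF /eqP hC]; rewrite CF /=.
  case: (eqVneq #|C| #|D|.+1) => hk.
    by move: BF; rewrite -pre_s'' -hk hC CF.
  by rewrite (Hpre s' Hs') // hC.
have lt : (#|G s'| < #|G s|)%N.
  by apply: proper_card; apply/properP; split => //; exists A.
have [pos' H'] := h_eq1 (Hall s').
have [_ H] := h_eq1 (Hall s).
have [C CG] : exists C, C \in G s' by apply/card_gt0P.
have := H' C CG; rewrite H; last by apply: (subsetP sub).
by move=> e; move: lt; rewrite e ltnn.
Qed.


Lemma same_eq (A B : {set T}) : A \subset B -> #|A| = #|B| -> A = B.
Proof. by move=> AB e; apply/eqP; rewrite eqEcard AB e leqnn. Qed.

Lemma key (Hall : forall s, h s = 1) (B : {set T}) m :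
  forall A : {set T}, (#|A :\: B| <= m)%N -> A \in F -> #|A| = #|B| -> B \in F.
Proof.
have base A : A \in F -> #|A| = #|B| -> A :\: B = set0 -> B \in F.
  move=> AF AB e0; have sAB : A \subset B by rewrite -setD_eq0 e0.
  by rewrite -(same_eq sAB AB).
elim: m => [|m IH] A hm AF AB; case: (set_0Vmem (A :\: B)) => [e0|[x hx]];
  try by apply: (base A).
  have : (0 < #|A :\: B|)%N by apply/card_gt0P; exists x.
  by rewrite lt0n -leqn0 hm.
move: (hx); rewrite inE => /andP[xB xA].
case: (set_0Vmem (B :\: A)) => [e1|[y hy]].
  have sBA : B \subset A by rewrite -setD_eq0 e1.
  by move: xB; rewrite (same_eq sBA (esym AB)) xA.
move: (hy); rewrite inE => /andP[yA yB].
have A'F := swap Hall AF xA yA.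
apply: (IH _ _ A'F).
  apply: (@leq_trans #|(A :\: B) :\ x|).
    apply: subset_leq_card; apply/subsetP => z.
    rewrite !inE => /andP[zB /orP[/eqP zy|/andP[zx zA]]]; first by rewrite zy yB in zB.
    by rewrite zx zB zA.
  by move: hm; rewrite (cardsD1 x (A :\: B)) hx.
rewrite cardsU1 !inE (negbTE yA) andbF /= -AB (cardsD1 x A) xA.
by rewrite add1n.
Qed.


Lemma card_le (X : {set T}) : (#|X| < n.+1)%N.
Proof. by have := max_card (mem X); rewrite card_ord. Qed.

Lemma levels_h (I : {set 'I_n.+1}) : I != set0 ->
  F = \bigcup_(i in I) level n i -> forall s, h s = 1.
Proof.
move=> I0 FI s.
have FX X : X \in F -> (inord #|X| : 'I_n.+1) \in I.
  rewrite FI => /bigcupP[i iI]; rewrite inE => /eqP Xi.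
  by have -> : (inord #|X| : 'I_n.+1) = i by apply: val_inj; rewrite /= inordK ?card_le.
have XF (i : 'I_n.+1) (X : {set T}) : i \in I -> #|X| = i -> X \in F.
  by move=> iI Xi; rewrite FI; apply/bigcupP; exists i => //; rewrite inE Xi.
have cle A : (c A <= #|I|)%N.
  apply/bigmax_leqP => C /and3P[CF _ Cc].
  pose f := fun X : {set T} => (inord #|X| : 'I_n.+1).
  have fi : {in C &, injective f}.
    move=> X Y XC YC /(congr1 val); rewrite /f /= !inordK ?card_le // => XY.
    have := (forallP Cc X); rewrite XC /= => /forallP /(_ Y); rewrite YC /=.
    by case/orP => [sXY|sYX]; [apply: same_eq | apply/esym/same_eq].
  rewrite -(card_in_imset fi); apply: subset_leq_card.
  apply/subsetP => _ /imsetP[X XC ->]; apply: FX; exact: (subsetP CF).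
have Gge : (#|I| <= #|G s|)%N.
  have gi : injective (fun i : 'I_n.+1 => pre s i).
    move=> i j e; have := congr1 (fun X : {set T} => #|X|) e; rewrite /= (card_pre s (ltn_ord i)) (card_pre s (ltn_ord j)) => e'.
    exact: val_inj e'.
  rewrite -(card_imset I gi); apply: subset_leq_card.
  apply/subsetP => _ /imsetP[i iI ->].
  rewrite inE (card_pre s (ltn_ord i)) eqxx andbT; apply: (XF i) => //.
  by rewrite (card_pre s (ltn_ord i)).
have pos : (0 < #|G s|)%N by apply: leq_trans Gge; rewrite card_gt0.
have ce A : A \in G s -> c A = #|G s|.
  move=> AG; apply/eqP; rewrite eqn_leq cG // andbT.
  exact: leq_trans (cle A) Gge.
rewrite /h (eq_bigr (fun _ => (#|G s|%:R : rat)^-1)); last by move=> A AG; rewrite ce.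
by rewrite sumr_const -[X in X = _]mulr_natl mulfV // pnatr_eq0 -lt0n.
Qed.

End S.

Local Open Scope ring_scope.

Theorem theorem4 (n : nat) (F : {set {set 'I_n}}) :
  (\sum_(A in F) ((('C(n, #|A|) * cmax F A)%N)%:R : rat)^-1 <= 1) /\
  ((\sum_(A in F) ((('C(n, #|A|) * cmax F A)%N)%:R : rat)^-1 = 1) <->
   exists I : {set 'I_n.+1},
     I != set0 /\ F = \bigcup_(i in I) level n i).
Proof.
split; first exact: sum_le1.
rewrite sum_eq1; split; last by move=> [I [I0 FI]]; exact: levels_h I0 FI.
move=> Hall.
exists [set i : 'I_n.+1 | [exists A in F, #|A| == i]]; split.
  have [pos _] := h_eq1 (Hall 1%g).
  have [A AG] : exists A, A \in G F 1%g by apply/card_gt0P.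
  have AF : A \in F by move: AG; rewrite inE => /andP[].
  apply/set0Pn; exists (inord #|A|); rewrite inE; apply/existsP; exists A.
  rewrite AF /= inordK; [exact: eqxx | exact: card_le].
apply/eqP; rewrite eqEsubset; apply/andP; split; apply/subsetP => B.
  move=> BF; apply/bigcupP; exists (inord #|B|).
    rewrite inE; apply/existsP; exists B; rewrite BF /= inordK; [exact: eqxx|exact: card_le].
  rewrite inE inordK; [exact: eqxx|exact: card_le].
move=> /bigcupP[i]; rewrite !inE => /existsP[A /andP[AF /eqP Ai]] /eqP Bi.
by apply: (key Hall (leqnn #|A :\: B|) AF); rewrite Ai Bi.
Qed.
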